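(* Let $n\ge 5$ and $x\in S_n$. Then $x\in\mathrm{Sort}_n(123,321)$ if and only if $\mathrm{inc}_{n+1}(x)\in\mathrm{Sort}_{n+1}(123,321)$.
   Context: For $x=x_1\cdots x_n\in S_n$, $\mathrm{inc}_{n+1}(x)=(x_1+1)(x_2+1)\cdots(x_n+1)\,1\in S_{n+1}$ (insert $1$ at the end and increase all other entries by one). A permutation contains a pattern $p$ if it has a subsequence order-isomorphic to $p$; otherwise it avoids $p$. For a set $T$ of patterns, the map $s_T$ is defined as follows: the entries of the input permutation are read from left to right, with an initially empty stack. At each step, if the input is nonempty and pushing the next input entry onto the stack produces a stack whose contents, read from top to bottom, avoid every pattern in $T$, that entry is pushed; otherwise the top entry of the stack is popped and appended to the output. When the input is exhausted, the remaining stack entries are popped one at a time to the output. Write $s_{\sigma,\tau}=s_{\{\sigma,\tau\}}$ and $s=s_{\{21\}}$ (West's stack-sorting map). $\mathrm{Sort}_n(\sigma,\tau)$ is the set of $x\in S_n$ with $s(s_{\sigma,\tau}(x))=12\cdots n$. *)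

(* Defs.v *)
From mathcomp Require Import all_boot.
Set Implicit Arguments. Unset Strict Implicit. Unset Printing Implicit Defensive.

(* Permutations of S_n are represented as sequences of naturals that are a
   rearrangement of 1..n (one-line notation). *)
Definition is_perm (n : nat) (x : seq nat) : bool := perm_eq x (iota 1 n).

Definition inc (x : seq nat) : seq nat := rcons (map succn x) 1.

Definition order_iso (s p : seq nat) : bool :=
  (size s == size p) &&
  all (fun i => all (fun j =>
     (nth 0 s i < nth 0 s j) == (nth 0 p i < nth 0 p j))
     (iota 0 (size s))) (iota 0 (size s)).

Fixpoint subseqs (s : seq nat) : seq (seq nat) :=
  if s is a :: s' then
    let r := subseqs s' in [seq a :: t | t <- r] ++ r
  else [:: [::]].

Definition contains (w p : seq nat) : bool :=
  has (fun t => order_iso t p) (subseqs w).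

Definition avoids_all (T : seq (seq nat)) (w : seq nat) : bool :=
  all (fun p => ~~ contains w p) T.

(* One step of the pattern-avoiding stack machine.  The stack is a list whose
   head is the top, so the list itself reads the contents top to bottom.
   State: (input, stack, output). *)
Definition stack_step (T : seq (seq nat)) (st : seq nat * seq nat * seq nat)
  : seq nat * seq nat * seq nat :=
  let: (inp, stk, out) := st in
  match inp with
  | a :: inp' =>
      if avoids_all T (a :: stk) then (inp', a :: stk, out)
      else match stk with
           | b :: stk' => (inp, stk', rcons out b)
           | [::] => (inp', [:: a], out) (* never happens for patterns of length >= 2 *)
           end
  | [::] =>
      match stk with
      | b :: stk' => (inp, stk', rcons out b)
      | [::] => st
      end
  end.

Fixpoint stack_run (T : seq (seq nat)) (fuel : nat) st :=
  if fuel is k.+1 then stack_run T k (stack_step T st) else st.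

(* s_T(x): each entry is pushed once and popped once, so 2|x| steps suffice. *)
Definition s_T (T : seq (seq nat)) (x : seq nat) : seq nat :=
  (stack_run T (2 * size x) (x, [::], [::])).2.

Definition s_pair (sigma tau : seq nat) := s_T [:: sigma; tau].

Definition west_s := s_T [:: [:: 2; 1]].

Definition in_Sort (n : nat) (sigma tau : seq nat) (x : seq nat) : bool :=
  is_perm n x && (west_s (s_pair sigma tau x) == iota 1 n).

(* Main.v *)
Require Import Defs.
From mathcomp Require Import all_boot zify.
Set Implicit Arguments. Unset Strict Implicit. Unset Printing Implicit Defensive.

Definition state := (seq nat * seq nat * seq nat)%type.
Definition meas (st : state) := 2 * size st.1.1 + size st.1.2.
Definition final T (st : state) := stack_run T (meas st) st.
Definition F T (st : state) := (final T st).2.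
Definition content (st : state) := st.2 ++ st.1.2 ++ st.1.1.

Lemma run_succ T k st : stack_run T k.+1 st = stack_run T k (stack_step T st).
Proof. by []. Qed.

Lemma meas_step T st : 0 < meas st -> meas (stack_step T st) = (meas st).-1.
Proof.
case: st => [[[|a inp] [|b stk]] out]; rewrite /meas /=.
- by [].
- by move=> _; lia.
- by case: ifP => _ /= _; lia.
- by case: ifP => _ /= _; lia.
Qed.

Lemma step_meas0 T st : meas st = 0 -> stack_step T st = st.
Proof. by case: st => [[[|a inp] [|b stk]] out]; rewrite /meas //=; lia. Qed.

Lemma F_step T st : F T st = F T (stack_step T st).
Proof.
rewrite /F /final.
case E: (meas st) => [|k].
  by rewrite step_meas0 // E.
rewrite run_succ meas_step ?E //.
Qed.

Lemma F_nil T out : F T ([::], [::], out) = out.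
Proof. by []. Qed.

Lemma pop_all T stk out : F T ([::], stk, out) = out ++ stk.
Proof.
elim: stk out => [|b stk IH] out; first by rewrite cats0.
by rewrite F_step /= IH cat_rcons.
Qed.

Lemma meas_ind (P : state -> Prop) :
  (forall st, (forall st', meas st' < meas st -> P st') -> P st) -> forall st, P st.
Proof.
move=> H st; have [k] := ubnP (meas st); elim: k st => [|k IH] st Hk; first by [].
apply: H => st' Hlt; apply: IH; lia.
Qed.

Lemma step_out T inp stk out :
  stack_step T (inp, stk, out) =
  let: (i', s', o') := stack_step T (inp, stk, [::]) in (i', s', out ++ o').
Proof.
case: inp => [|a inp]; case: stk => [|b stk] //=; rewrite ?cats0 ?cats1 //.
- by case: ifP => _ /=; rewrite ?cats0.
- by case: ifP => _ /=; rewrite ?cats0 ?cats1.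
Qed.

Lemma F_out T inp stk out : F T (inp, stk, out) = out ++ F T (inp, stk, [::]).
Proof.
have H := @meas_ind (fun st => forall out,
  F T (st.1.1, st.1.2, out) = out ++ F T (st.1.1, st.1.2, [::])).
move: out; apply: (H _ (inp, stk, [::])) => st IH out.
case: st IH => [[i s] o0] IH /=.
case E: (meas (i, s, [::])) => [|k].
  case: i E IH => [|a i] E IH; last by move: E; rewrite /meas /=; lia.
  case: s E IH => [|b s] E IH; last by move: E; rewrite /meas /=; lia.
  by rewrite /F /final /meas /= cats0.
rewrite F_step step_out [F T (i, s, [::])]F_step.
case Es: (stack_step T (i, s, [::])) => [[i' s'] o'].
have Hm : meas (i', s', [::]) < meas (i, s, o0).
  have := @meas_step T (i, s, [::]); rewrite E Es /meas /= => -> //.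
  by move: E; rewrite /meas /= => ->.
have := IH (i', s', [::]) Hm (out ++ o'); rewrite /= => ->.
have := IH (i', s', [::]) Hm o'; rewrite /= => ->.
by rewrite catA.
Qed.

Lemma content_step T st : perm_eq (content (stack_step T st)) (content st).
Proof.
case: st => [[[|a inp] [|b stk]] out]; rewrite /content /=.
- by [].
- by rewrite cat_rcons.
- by case: ifP.
- case: ifP => _ /=.
    rewrite perm_cat2l.
    apply: (@perm_trans _ ([:: a] ++ (b :: stk) ++ inp)) => //.
    by rewrite perm_catCA.
  by rewrite cat_rcons.
Qed.

Lemma F_perm T st : perm_eq (F T st) (content st).
Proof.
elim/meas_ind: st => st IH.
case E: (meas st) => [|k].
  case: st E IH => [[[|a i] [|b s]] o] //= E IH; try (rewrite /meas /= in E; lia).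
  by rewrite /F /final /content /meas /= cats0.
rewrite F_step; apply: perm_trans (content_step T st).
apply: IH; rewrite meas_step ?E //.
Qed.

Lemma mem_F T st y : (y \in F T st) = (y \in content st).
Proof. exact: (perm_mem (F_perm T st)). Qed.

Lemma step_app T inp stk out z : inp != [::] ->
  stack_step T (inp ++ z, stk, out) =
  let: (i', s', o') := stack_step T (inp, stk, out) in (i' ++ z, s', o').
Proof.
case: inp => [|a inp] // _; case: stk => [|b stk] /=; by case: ifP.
Qed.

Lemma phase1 T (Q : state -> Prop) :
  (forall st, Q st -> st.1.1 != [::] -> Q (stack_step T st)) ->
  forall st, Q st -> exists S O, Q ([::], S, O) /\
    forall z, F T (st.1.1 ++ z, st.1.2, st.2) = F T (z, S, O).
Proof.
move=> HQ; elim/meas_ind => st IH Qst.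
case: st IH Qst => [[i s] o] IH Qst.
case: i IH Qst => [|a i] IH Qst.
  by exists s, o; split.
have := HQ _ Qst isT.
case Es: (stack_step T (a :: i, s, o)) => [[i' s'] o'] Q'.
have Hm : meas (i', s', o') < meas (a :: i, s, o).
  have := @meas_step T (a :: i, s, o); rewrite Es => -> //; rewrite /meas /=; lia.
have [S [O [QS HS]]] := IH _ Hm Q'.
exists S, O; split => // z /=.
rewrite F_step -cat_cons step_app // Es.
exact: HS.
Qed.

Lemma mem_subseqs s t : (t \in subseqs s) = subseq t s.
Proof.
elim: s t => [|a s IH] t /=.
  by rewrite inE; case: t.
rewrite mem_cat IH.
case: t => [|b t] /=.
  by rewrite sub0seq orbT.
case: (eqVneq b a) => [->|ne].
  apply/orP/idP => [[/mapP[t' Ht' [Ht]]|H]|H]; first by rewrite Ht -IH.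
    by apply: subseq_trans H; apply: subseq_cons.
  by left; apply/mapP; exists t => //; rewrite IH.
rewrite orb_idl // => /mapP[t' _ [Hb _]]; by rewrite Hb eqxx in ne.
Qed.

Lemma containsP s p : reflect (exists t, subseq t s /\ order_iso t p) (contains s p).
Proof.
apply: (iffP hasP) => [[t Ht Ho]|[t [Ht Ho]]].
  by exists t; rewrite -mem_subseqs.
by exists t; rewrite ?mem_subseqs.
Qed.

Lemma oi123 p q r : order_iso [:: p; q; r] [:: 1; 2; 3] = (p < q < r).
Proof. rewrite /order_iso /= !ltnn /=.
by case: (ltngtP p q); case: (ltngtP q r); case: (ltngtP p r) => //= *; lia.
Qed.
Lemma oi321 p q r : order_iso [:: p; q; r] [:: 3; 2; 1] = (r < q < p).
Proof. rewrite /order_iso /= !ltnn /=.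
by case: (ltngtP p q); case: (ltngtP q r); case: (ltngtP p r) => //= *; lia.
Qed.
Lemma oi21 p q : order_iso [:: p; q] [:: 2; 1] = (q < p).
Proof. rewrite /order_iso /= !ltnn /=.
by case: (ltngtP p q) => //= *; lia.
Qed.

Lemma oi_size t p : order_iso t p -> size t = size p.
Proof. by case/andP => /eqP. Qed.

Lemma c123P s : reflect (exists p q r, subseq [:: p; q; r] s /\ p < q < r)
  (contains s [:: 1; 2; 3]).
Proof.
apply: (iffP (containsP _ _)) => [[t [Ht Ho]]|[p [q [r [H1 H2]]]]].
  have := oi_size Ho; case: t Ht Ho => [|p [|q [|r [|? ?]]]] //= Ht Ho _.
  by exists p, q, r; rewrite -oi123.
by exists [:: p; q; r]; rewrite oi123.
Qed.

Lemma c321P s : reflect (exists p q r, subseq [:: p; q; r] s /\ r < q < p)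
  (contains s [:: 3; 2; 1]).
Proof.
apply: (iffP (containsP _ _)) => [[t [Ht Ho]]|[p [q [r [H1 H2]]]]].
  have := oi_size Ho; case: t Ht Ho => [|p [|q [|r [|? ?]]]] //= Ht Ho _.
  by exists p, q, r; rewrite -oi321.
by exists [:: p; q; r]; rewrite oi321.
Qed.

Lemma c21P s : reflect (exists p q, subseq [:: p; q] s /\ q < p)
  (contains s [:: 2; 1]).
Proof.
apply: (iffP (containsP _ _)) => [[t [Ht Ho]]|[p [q [H1 H2]]]].
  have := oi_size Ho; case: t Ht Ho => [|p [|q [|? ?]]] //= Ht Ho _.
  by exists p, q; rewrite -oi21.
by exists [:: p; q]; rewrite oi21.
Qed.

Definition T3 := [:: [:: 1; 2; 3]; [:: 3; 2; 1]].
Definition W2 := [:: [:: 2; 1]].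

Lemma avT3 s : avoids_all T3 s = ~~ contains s [:: 1; 2; 3] && ~~ contains s [:: 3; 2; 1].
Proof. by rewrite /avoids_all /= andbT. Qed.

Lemma avW2 s : avoids_all W2 s = ~~ contains s [:: 2; 1].
Proof. by rewrite /avoids_all /= andbT. Qed.

Lemma contains_sub s1 s2 p : subseq s1 s2 -> contains s1 p -> contains s2 p.
Proof.
move=> H /containsP [t [Ht Ho]]; apply/containsP; exists t; split => //.
exact: subseq_trans Ht H.
Qed.

Lemma avoids_sub T s1 s2 : subseq s1 s2 -> avoids_all T s2 -> avoids_all T s1.
Proof.
move=> H /allP A; apply/allP => p Hp; apply/negP => C.
by have := A p Hp; rewrite (contains_sub H C).
Qed.

Lemma avoids_cons T a s : avoids_all T (a :: s) -> avoids_all T s.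
Proof. by apply: avoids_sub; apply: subseq_cons. Qed.

Lemma small_avoid s : size s < 3 -> avoids_all T3 s.
Proof.
move=> Hs; rewrite avT3; apply/andP; split; apply/negP.
  move/c123P => [p [q [r [H _]]]]; have := size_subseq H; rewrite /=; lia.
move/c321P => [p [q [r [H _]]]]; have := size_subseq H; rewrite /=; lia.
Qed.

Lemma sub_pair_cat (x y : nat) s1 s2 : x \in s1 -> y \in s2 -> subseq [:: x; y] (s1 ++ s2).
Proof.
move=> Hx Hy; rewrite -cat1s; apply: cat_subseq; by rewrite sub1seq.
Qed.

Lemma sub_cons_inv (p x : nat) t s : subseq (p :: t) (x :: s) ->
  (p = x /\ subseq t s) \/ subseq (p :: t) s.
Proof. rewrite /=; case: (eqVneq p x) => [->|_]; by auto. Qed.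

Lemma sub2_cat (b c : nat) l1 l2 : subseq [:: b; c] (l1 ++ l2) ->
  subseq [:: b; c] l1 \/ (b \in l1 /\ c \in l2) \/ subseq [:: b; c] l2.
Proof.
elim: l1 => [|a l1 IH] /=; first by auto.
case: (eqVneq b a) => [->|ne].
  rewrite -/(subseq [:: c] (l1 ++ l2)) sub1seq mem_cat => /orP[H|H].
    by left; rewrite /= ?eqxx ?sub1seq.
  by right; left; rewrite inE eqxx.
move=> /IH [H|[[H1 H2]|H]].
- by left.
- by right; left; rewrite inE H1 orbT.
- by right; right.
Qed.

Lemma F_order T inp stk out p q : subseq [:: p; q] stk ->
  subseq [:: p; q] (F T (inp, stk, out)).
Proof.
have H := @meas_ind (fun st => subseq [:: p; q] st.1.2 ->
  subseq [:: p; q] (F T st)).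
apply: (H _ (inp, stk, out)) => {H inp stk out} [[[i s] o]] IH /= Hs.
have popcase : forall b s', s = b :: s' ->
  stack_step T (i, s, o) = (i, s', rcons o b) ->
  subseq [:: p; q] (F T (i, s, o)).
  move=> b s' Es Est; rewrite F_step Est.
  move: Hs; rewrite Es => /sub_cons_inv [[-> Hq]|Hs'].
    rewrite F_out; apply: sub_pair_cat.
      by rewrite mem_rcons inE eqxx.
    by rewrite mem_F /content /= mem_cat -sub1seq Hq.
  apply: (IH (i, s', rcons o b)) => //; rewrite /meas Es /=; lia.
case: i IH Hs popcase => [|a i] IH Hs popcase.
  case: s IH Hs popcase => [|b s] IH Hs popcase; first by [].
  exact: (popcase b s).
case: s IH Hs popcase => [|b s] IH Hs popcase; first by [].
case Ha: (avoids_all T (a :: b :: s)).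
  rewrite F_step /= Ha; apply: (IH (i, a :: b :: s, o)); rewrite /meas /=; first lia.
  by apply: subseq_trans Hs (subseq_cons _ _).
by apply: (popcase b s) => //=; rewrite Ha.
Qed.

Lemma subseqs_map (f : nat -> nat) s : subseqs (map f s) = map (map f) (subseqs s).
Proof.
elim: s => [|a s IH] //=; by rewrite IH map_cat -!map_comp.
Qed.

Lemma oi_map t p : order_iso (map succn t) p = order_iso t p.
Proof.
rewrite /order_iso size_map; congr (_ && _).
apply: eq_in_all => i; rewrite mem_iota => /andP[_ Hi].
apply: eq_in_all => j; rewrite mem_iota => /andP[_ Hj].
rewrite (nth_map 0) // (nth_map 0) //.
Qed.

Lemma contains_map s p : contains (map succn s) p = contains s p.
Proof.
rewrite /contains subseqs_map has_map; apply: eq_has => t /=; exact: oi_map.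
Qed.

Lemma avoids_map T s : avoids_all T (map succn s) = avoids_all T s.
Proof. by apply: eq_all => p; rewrite contains_map. Qed.

Lemma step_map T i s o : stack_step T (map succn i, map succn s, map succn o) =
  let: (i', s', o') := stack_step T (i, s, o) in (map succn i', map succn s', map succn o').
Proof.
case: i => [|a i]; case: s => [|b s] //=; rewrite ?map_rcons //.
  by case: ifP; case: ifP.
rewrite (avoids_map T (a :: b :: s)); case: ifP => _ //=.
by rewrite map_rcons.
Qed.

Lemma F_map T i s o : F T (map succn i, map succn s, map succn o) = map succn (F T (i, s, o)).
Proof.
have H := @meas_ind (fun st => F T (map succn st.1.1, map succn st.1.2, map succn st.2)
  = map succn (F T st)).
apply: (H _ (i, s, o)) => {H i s o} [[[i s] o]] IH /=.
case E: (meas (i, s, o)) => [|k].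
  case: i s E IH => [|a i] [|b s] E IH; try (rewrite /meas /= in E; lia).
  by [].
rewrite F_step step_map [F T (i, s, o)]F_step.
case Es: (stack_step T (i, s, o)) => [[i' s'] o'].
apply: (IH (i', s', o')).
have := @meas_step T (i, s, o); rewrite Es E => -> //.
Qed.

Definition pat231 (s : seq nat) :=
  exists b c a, subseq [:: b; c; a] s /\ a < b < c.

Lemma pop_sub T i s o (b a : nat) : b \in o -> a \in s ++ i -> subseq [:: b; a] (F T (i, s, o)).
Proof.
move=> Hb Ha; rewrite F_out; apply: sub_pair_cat => //.
by rewrite mem_F /content.
Qed.

Lemma sub_cons2 (c b : nat) s : b \in s -> subseq [:: c; b] (c :: s).
Proof.
move=> H; rewrite -[c :: s]cat1s -[[:: c; b]]cat1s; apply: cat_subseq => //.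
by rewrite sub1seq.
Qed.

Lemma sorted_avoid21 s : sorted ltn s -> avoids_all W2 s.
Proof.
move=> Hs; rewrite avW2; apply/negP => /c21P [p [q [H Hqp]]].
have := subseq_sorted ltn_trans H Hs; rewrite /= andbT; lia.
Qed.

Lemma west231 y : pat231 y -> sorted ltn (F W2 (y, [::], [::])) -> False.
Proof.
move=> [b [c [a [Hsub /andP[Hab Hbc]]]]] Hsort.
set V := F W2 (y, [::], [::]).
pose Q (st : state) := F W2 st = V /\
  (subseq [:: b; c; a] st.1.1 \/ (b \in st.1.2 /\ subseq [:: c; a] st.1.1)
   \/ subseq [:: b; a] V).
have HQ : forall st, Q st -> st.1.1 != [::] -> Q (stack_step W2 st).
  move=> [[i s] o] [HV H]; case: i H HV => [|h i] // H HV _.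
  split; first by rewrite -HV [in RHS]F_step.
  cbn [fst snd] in H.
  case: s HV H => [|t s] HV H.
    have -> : stack_step W2 (h :: i, [::], o) = (i, [:: h], o) by rewrite /stack_step; case: (avoids_all _ _).
    cbn [fst snd].
    case: H => [H|[[Hb H]|H]]; [|by []|by auto].
    move/sub_cons_inv: H => [[-> H]|H]; auto.
    by right; left; rewrite inE eqxx.
  case Hav: (avoids_all W2 [:: h, t & s]).
    have -> : stack_step W2 (h :: i, t :: s, o) = (i, [:: h, t & s], o) by rewrite /stack_step Hav.
    cbn [fst snd].
    case: H => [H|[[Hb H]|H]]; last by auto.
      move/sub_cons_inv: H => [[-> H]|H]; auto.
      by right; left; rewrite inE eqxx.
    move/sub_cons_inv: H => [[Hh H]|H].
      exfalso; move: Hav; rewrite avW2 -Hh => /negP; apply; apply/c21P.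
      by exists c, b; split => //; apply: sub_cons2.
    by right; left; rewrite inE Hb orbT.
  have Est : stack_step W2 (h :: i, t :: s, o) = (h :: i, s, rcons o t) by rewrite /stack_step Hav.
  rewrite Est; cbn [fst snd].
  case: H => [H|[[Hb H]|H]]; [by auto| |by auto].
  move: Hb; rewrite inE => /orP[/eqP Hbt|Hb]; last by auto.
  right; right; rewrite -HV F_step Est; subst t.
  apply: pop_sub; first by rewrite mem_rcons inE eqxx.
  rewrite mem_cat; apply/orP; right.
  by apply: (mem_subseq H); rewrite !inE eqxx orbT.
have [S [O [[_ HS] _]]] := @phase1 W2 Q HQ (y, [::], [::]) (conj erefl (or_introl Hsub)).
case: HS => [|[[_ H]|H]] //.
have := subseq_sorted ltn_trans H Hsort; rewrite /= andbT; lia.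
Qed.

Lemma push_dec u stk z out : sorted ltn (rev u ++ stk) ->
  F W2 (u ++ z, stk, out) = F W2 (z, rev u ++ stk, out).
Proof.
elim: u stk => [|a u IH] stk //= Hs.
have Ha : sorted ltn (a :: stk).
  by move: Hs; rewrite rev_cons cat_rcons => /(subseq_sorted ltn_trans) -> //; rewrite suffix_subseq.
rewrite F_step.
have -> : stack_step W2 (a :: u ++ z, stk, out) = (u ++ z, a :: stk, out).
  by rewrite /stack_step (sorted_avoid21 Ha).
rewrite IH; first by rewrite rev_cons cat_rcons.
by rewrite rev_cons cat_rcons in Hs.
Qed.

Lemma west_insert u v m0 : sorted (fun a b => b < a) u ->
  (forall y, y \in u ++ v -> m0 < y) ->
  F W2 (u ++ m0 :: v, [::], [::]) = m0 :: F W2 (u ++ v, [::], [::]).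
Proof.
move=> Hu Hm.
have Hr : sorted ltn (rev u ++ [::]) by rewrite cats0 rev_sorted.
rewrite !push_dec // cats0.
have Hs : sorted ltn (m0 :: rev u).
  rewrite /= path_sortedE; last exact: ltn_trans.
  rewrite rev_sorted Hu andbT; apply/allP => y; rewrite mem_rev => Hy.
  by apply: Hm; rewrite mem_cat Hy.
rewrite F_step.
have -> : stack_step W2 (m0 :: v, rev u, [::]) = (v, m0 :: rev u, [::]).
  by rewrite /stack_step (sorted_avoid21 Hs).
case: v Hm => [|h v] Hm.
  by rewrite F_step /= F_out.
have Hh : avoids_all W2 [:: h, m0 & rev u] = false.
  apply/negP; rewrite avW2 => /negP; apply; apply/c21P; exists h, m0; split.
    by apply: sub_cons2; rewrite inE eqxx.
  by apply: Hm; rewrite mem_cat inE eqxx orbT.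
by rewrite F_step /stack_step Hh F_out.
Qed.

Definition asc (s : seq nat) := exists p q, subseq [:: p; q] s /\ p < q.

Lemma sub3_12 (p q r : nat) s : subseq [:: p; q; r] s -> subseq [:: p; q] s.
Proof. apply: subseq_trans; by rewrite /= !eqxx. Qed.

Lemma sub_cons3 (m q r : nat) s : subseq [:: q; r] s -> subseq [:: m; q; r] (m :: s).
Proof. move=> H; rewrite -[m :: s]cat1s -[[:: m; q; r]]cat1s; exact: cat_subseq. Qed.

Lemma no123 s p q r : avoids_all T3 s -> subseq [:: p; q; r] s -> p < q < r -> False.
Proof.
rewrite avT3 => /andP[/negP H _] Hs Hl; apply: H; apply/c123P; by exists p, q, r.
Qed.

Lemma no321 s p q r : avoids_all T3 s -> subseq [:: p; q; r] s -> r < q < p -> False.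
Proof.
rewrite avT3 => /andP[_ /negP H] Hs Hl; apply: H; apply/c321P; by exists p, q, r.
Qed.

Lemma notav s : avoids_all T3 s = false ->
  exists p q r, subseq [:: p; q; r] s /\ (p < q < r \/ r < q < p).
Proof.
rewrite avT3 => /negbT; rewrite negb_and !negbK => /orP[/c123P|/c321P] [p [q [r [H1 H2]]]];
by exists p, q, r; auto.
Qed.

Lemma last_phase m0 S O : avoids_all T3 S -> (forall y, y \in S -> m0 < y) ->
  exists P S2, S = P ++ S2 /\ F T3 ([:: m0], S, O) = O ++ P ++ m0 :: S2 /\
    (forall j, j < size P -> asc (drop j S)).
Proof.
elim: S O => [|b S IH] O Hav Hm.
  exists [::], [::]; split => //; split => //.
  by rewrite F_step /stack_step; case: (avoids_all _ _); rewrite pop_all.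
case Ha: (avoids_all T3 [:: m0, b & S]).
  exists [::], (b :: S); split => //; split => //.
  by rewrite F_step /stack_step Ha pop_all.
have [P [S2 [ES [EF Hasc]]]] := IH (rcons O b) (avoids_cons Hav)
  (fun y Hy => Hm y (mem_behead (s := b :: S) Hy)).
exists (b :: P), S2; split; first by rewrite ES.
split; first by rewrite F_step /stack_step Ha EF cat_rcons.
case => [|j] Hj; last by apply: Hasc.
have [p [q [r [Hs Hl]]]] := notav Ha.
move/sub_cons_inv: Hs => [[Ep Hs]|Hs].
  case: Hl => Hl.
    by exists q, r; split => //; lia.
  move: Hs => /sub_cons_inv [[Eq _]|Hs].
    have := Hm q; rewrite Eq inE eqxx => /(_ isT); lia.
  have := Hm q; rewrite inE (mem_subseq Hs (mem_head _ _)) orbT => /(_ isT); lia.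
case: Hl => Hl.
  by exists p, q; split; [exact: (sub3_12 Hs) | lia].
by exfalso; apply: (no321 Hav Hs Hl).
Qed.

Lemma av_step st : avoids_all T3 st.1.2 -> avoids_all T3 (stack_step T3 st).1.2.
Proof.
case: st => [[[|h i] [|t s]] o] Hs.
- by [].
- exact: (avoids_cons Hs).
- have -> : (stack_step T3 (h :: i, [::], o)).1.2 = [:: h] by rewrite /stack_step; case: (avoids_all _ _).
  exact: small_avoid.
- rewrite /stack_step; case E: (avoids_all T3 [:: h, t & s]) => //=; exact: (avoids_cons Hs).
Qed.

Lemma dec_pair m B x y : avoids_all T3 (m :: B) -> (forall z, z \in B -> m < z) ->
  uniq B -> subseq [:: x; y] B -> y < x.
Proof.
move=> Hav Hm Hu Hs.
have Hx : m < x by apply: Hm; apply: (mem_subseq Hs); rewrite inE eqxx.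
have Hne : x != y.
  by have := subseq_uniq Hs Hu; rewrite /= inE andbT.
case: (ltngtP x y) Hne => // Hxy _.
by exfalso; apply: (no123 Hav (sub_cons3 m Hs)); rewrite Hx Hxy.
Qed.

Lemma m_pop i o h m B : avoids_all T3 (m :: B) -> avoids_all T3 [:: h, m & B] = false ->
  m < h -> (forall y, y \in B -> m < y) -> uniq B -> pat231 (F T3 (h :: i, m :: B, o)).
Proof.
move=> Hav Hav' Hmh Hm Hu.
have [q [r [HqrB Hl]]] : exists q r, subseq [:: q; r] B /\ r < q < h.
  have [p [q [r [Hs Hl]]]] := notav Hav'.
  move/sub_cons_inv: Hs => [[Ep Hs]|Hs]; last first.
    by exfalso; case: Hl => Hl; [exact: (no123 Hav Hs Hl) | exact: (no321 Hav Hs Hl)].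
  move/sub_cons_inv: Hs => [[Eq Hs]|Hs].
    exfalso; case: Hl => Hl; first lia.
    have : m < r by apply: Hm; rewrite -sub1seq.
    lia.
  case: Hl => Hl.
    exfalso; apply: (no123 Hav (sub_cons3 m Hs)).
    have : m < q by apply: Hm; apply: (mem_subseq Hs); rewrite inE eqxx.
    lia.
  by exists q, r; split => //; lia.
have EB : B = [:: q; r].
  case: B Hav Hav' Hm Hu HqrB => [|d1 [|d2 [|d3 B']]] Hav Hav' Hm Hu HqrB //.
  - by have := size_subseq HqrB.
  - by apply/eqP; rewrite eq_sym -(size_subseq_leqif HqrB).2.
  - exfalso.
    have H12 : d2 < d1.
      by apply: (dec_pair Hav Hm Hu); exact: (prefix_subseq [:: d1; d2] (d3 :: B')).
    have H23 : d3 < d2.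
      apply: (dec_pair Hav Hm Hu).
      exact: (subseq_trans (prefix_subseq [:: d2; d3] B') (subseq_cons _ d1)).
    apply: (no321 Hav (p := d1) (q := d2) (r := d3)); last by rewrite H23 H12.
    exact: (subseq_trans (prefix_subseq [:: d1; d2; d3] B') (subseq_cons _ m)).
subst B.
rewrite F_step /stack_step Hav'.
have Hb : avoids_all T3 [:: h; q; r] = false.
  apply/negbTE; rewrite avT3 negb_and negbK; apply/orP; right.
  rewrite negbK; by apply/c321P; exists h, q, r; split => //; lia.
rewrite F_step /stack_step Hb.
rewrite F_step /stack_step (small_avoid (s := [:: h; r])) //.
rewrite F_out; exists q, h, r; split; last lia.
rewrite -[[:: q; h; r]]cat1s; apply: cat_subseq.
  by rewrite sub1seq mem_rcons inE eqxx.
by apply: F_order.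
Qed.

Lemma uniq_disj (s1 s2 : seq nat) a : uniq (s1 ++ s2) -> a \in s1 -> a \in s2 -> False.
Proof. rewrite cat_uniq => /and3P[_ /hasPn H _] H1 H2. by have := H a H2; rewrite /= H1. Qed.

Lemma main_phase xt m : uniq xt -> m \in xt -> (forall y, y \in xt -> m <= y) ->
  exists S O, avoids_all T3 S /\ perm_eq (O ++ S) xt /\
    (forall z, F T3 (xt ++ z, [::], [::]) = F T3 (z, S, O)) /\
    (pat231 (O ++ S) \/ m \in S).
Proof.
move=> Hu Hmx Hmin.
set W := F T3 (xt, [::], [::]).
pose Q (st : state) := perm_eq (content st) xt /\ F T3 st = W /\ avoids_all T3 st.1.2 /\
  (m \in st.1.1 \/ (exists A B, st.1.2 = A ++ m :: B /\ avoids_all T3 (m :: B)) \/ pat231 W).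
have HQ : forall st, Q st -> st.1.1 != [::] -> Q (stack_step T3 st).
  move=> st [Hc [HF [Hav HM]]] Hne.
  split; first exact: perm_trans (content_step T3 st) Hc.
  split; first by rewrite -HF [in RHS]F_step.
  split; first exact: av_step.
  case: st Hc HF Hav HM Hne => [[[|h i] s] o] Hc HF Hav HM // _.
  have Hu' : uniq (o ++ s ++ h :: i) by rewrite (perm_uniq Hc).
  have Hin : forall y, y \in o ++ s ++ h :: i -> m <= y.
    by move=> y Hy; apply: Hmin; rewrite -(perm_mem Hc).
  cbn [fst snd] in HM |- *.
  case: s Hc HF Hav HM Hu' Hin => [|t s] Hc HF Hav HM Hu' Hin.
    have -> : stack_step T3 (h :: i, [::], o) = (i, [:: h], o).
      by rewrite /stack_step; case: (avoids_all _ _).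
    cbn [fst snd].
    case: HM => [HM|[[A [B [EA _]]]|HM]]; last by auto.
      move: HM; rewrite inE => /orP[/eqP ->|HM]; last by auto.
      by right; left; exists [::], [::]; split => //; apply: small_avoid.
    by case: A EA.
  case Ha: (avoids_all T3 [:: h, t & s]).
    have -> : stack_step T3 (h :: i, t :: s, o) = (i, [:: h, t & s], o).
      by rewrite /stack_step Ha.
    cbn [fst snd].
    case: HM => [HM|[[A [B [EA HB]]]|HM]]; last by auto.
      move: HM; rewrite inE => /orP[/eqP Ehm|HM]; last by auto.
      by right; left; exists [::], (t :: s); rewrite Ehm.
    by right; left; exists (h :: A), B; rewrite EA.
  have Est : stack_step T3 (h :: i, t :: s, o) = (h :: i, s, rcons o t).
    by rewrite /stack_step Ha.
  rewrite Est; cbn [fst snd].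
  case: HM => [HM|[[A [B [EA HB]]]|HM]]; [by auto| |by auto].
  case: A EA => [|a A] EA; last first.
    by case: EA => _ ->; right; left; exists A, B.
  case: EA => Et Es; subst t s.
  have HuB : uniq (m :: B).
    by move: Hu'; rewrite uniq_catCA cat_uniq => /and3P[].
  move: (HuB) => /andP[HmB HuB'].
  right; right; rewrite -HF; apply: m_pop => //.
  - have : m <= h by apply: Hin; rewrite !mem_cat mem_head !orbT.
    have : h != m.
      apply/negP => /eqP Ehm.
      apply: (uniq_disj (s1 := o ++ m :: B) (s2 := h :: i) (a := m)).
      + by rewrite -catA.
      + by rewrite mem_cat mem_head orbT.
      + by rewrite Ehm mem_head.
    lia.
  - move=> y Hy.
    have : m <= y by apply: Hin; rewrite !mem_cat inE Hy !orbT.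
    have : y != m by apply/negP => /eqP Eym; rewrite -Eym Hy in HmB.
    lia.
have Q0 : Q (xt, [::], [::]).
  by split; [by rewrite /content | split; [by [] | split; [by [] | left]]].
have [S [O [[Hc [HF [Hav HM]]] Hz]]] := @phase1 T3 Q HQ _ Q0.
have EW : W = O ++ S by rewrite -HF pop_all.
exists S, O; split => //; split; first by move: Hc; rewrite /content cats0.
split; first exact: Hz.
case: HM => [//|[[A [B [EA _]]]|HM]].
  by right; move: EA; rewrite /= => ->; rewrite mem_cat mem_head orbT.
by left; rewrite -EW.
Qed.

Lemma not_pairwise (r : rel nat) s : ~~ pairwise r s ->
  exists x y, subseq [:: x; y] s /\ ~~ r x y.
Proof.
elim: s => [|a s IH] //=; rewrite negb_and => /orP[/allPn[y Hy Hr]|H].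
  by exists a, y; split => //; apply: sub_cons2.
have [x [y [Hs Hr]]] := IH H; exists x, y; split => //.
exact: subseq_trans Hs (subseq_cons _ _).
Qed.

Lemma sub3_of (b c a : nat) l1 l2 : subseq [:: b; c] l1 -> a \in l2 ->
  subseq [:: b; c; a] (l1 ++ l2).
Proof.
move=> H1 H2; rewrite -[[:: b; c; a]]/([:: b; c] ++ [:: a]); apply: cat_subseq => //.
by rewrite sub1seq.
Qed.

Lemma drop_mid (P1 X : seq nat) (x : nat) : drop (size P1).+1 (P1 ++ x :: X) = X.
Proof. elim: P1 => [|a P1 IH] /=; [exact: drop0 | exact: IH]. Qed.

Lemma asc_contra O P S2 b c : avoids_all T3 (P ++ S2) -> uniq (O ++ P ++ S2) ->
  2 \in P ++ S2 -> (forall y, y \in O ++ P ++ S2 -> 2 <= y) ->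
  (forall j, j < size P -> asc (drop j (P ++ S2))) ->
  subseq [:: b; c] (O ++ P) -> b < c -> pat231 (O ++ P ++ S2).
Proof.
move=> Hav Hu H2 Hge Hasc Hs Hbc.
have Hb : 2 <= b by apply: Hge; rewrite catA mem_cat (mem_subseq Hs) // mem_head.
rewrite mem_cat in H2; case/orP: H2 => [H2P|H2v]; last first.
  exists b, c, 2; split; first by rewrite catA; apply: sub3_of.
  have : b != 2.
    apply/negP => /eqP Eb; apply: (uniq_disj (s1 := O ++ P) (s2 := S2) (a := 2)) => //.
    - by rewrite -catA.
    - by rewrite -Eb (mem_subseq Hs) // mem_head.
  lia.
move: Hav Hu Hge Hasc Hs; case/splitPr: H2P => P1 P2 Hav Hu Hge Hasc Hs.
case: P2 Hav Hu Hge Hasc Hs => [|p P2] Hav Hu Hge Hasc Hs.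
  have Hu' : uniq ((O ++ P1) ++ 2 :: S2) by move: Hu; rewrite -!catA.
  have H2n : 2 \notin O ++ P1.
    apply/negP => H; exact: (uniq_disj Hu' H (mem_head _ _)).
  move: Hs; rewrite (catA O P1 [:: 2]) => /sub2_cat [Hs|[[_ Hc]|Hs]].
  - exists b, c, 2; split.
      rewrite -!catA /= catA.
      by apply: sub3_of; [exact: Hs | rewrite mem_head].
    have : b != 2 by apply/negP => /eqP Eb; rewrite -Eb (mem_subseq Hs) ?mem_head in H2n.
    lia.
  - by move: Hc; rewrite inE => /eqP Ec; lia.
  - by have := size_subseq Hs.
exfalso.
have Hj : (size P1).+1 < size (P1 ++ 2 :: p :: P2) by rewrite size_cat /=; lia.
have := Hasc _ Hj; rewrite -catA /= drop_mid => [[q [r [Hqr Hl]]]].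
have Hu2 : uniq (2 :: p :: P2 ++ S2).
  apply: (subseq_uniq _ Hu); rewrite -!catA catA; exact: suffix_subseq.
have Hq : q \in p :: P2 ++ S2 by apply: (mem_subseq Hqr); rewrite mem_head.
have Hq2 : 2 < q.
  have : 2 <= q.
    apply: Hge.
    rewrite (_ : O ++ (P1 ++ [:: 2, p & P2]) ++ S2 = (O ++ P1 ++ [:: 2]) ++ (p :: P2 ++ S2)).
      by rewrite mem_cat Hq orbT.
    by rewrite -!catA.
  have : q != 2 by apply/negP => /eqP Eq; move: Hu2; rewrite /= -Eq Hq.
  lia.
apply: (no123 Hav (p := 2) (q := q) (r := r)); last by rewrite Hq2 Hl.
rewrite -catA /=; apply: (subseq_trans _ (suffix_subseq P1 _)).
exact: sub_cons3.
Qed.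

Lemma core xt n : perm_eq xt (iota 2 n) -> 0 < n ->
  (F W2 (F T3 (xt, [::], [::]), [::], [::]) == iota 2 n) =
  (F W2 (F T3 (xt ++ [:: 1], [::], [::]), [::], [::]) == iota 1 n.+1).
Proof.
move=> Hp Hn.
have Hux : uniq xt by rewrite (perm_uniq Hp) iota_uniq.
have Hge : forall y, y \in xt -> 2 <= y.
  by move=> y; rewrite (perm_mem Hp) mem_iota => /andP[].
have H2 : 2 \in xt by rewrite (perm_mem Hp) mem_iota; apply/andP; split => //; lia.
have [S [O [Hav [HpW [Hz Hcase]]]]] := main_phase Hux H2 Hge.
have HSx : forall y, y \in S -> y \in xt.
  by move=> y Hy; rewrite -(perm_mem HpW) mem_cat Hy orbT.
have [P [S2 [ES [EF Hasc]]]] := @last_phase 1 S O Hav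
  (fun y Hy => leq_trans (isT : 1 < 2) (Hge y (HSx y Hy))).
have EW : F T3 (xt, [::], [::]) = (O ++ P) ++ S2.
  by have := Hz [::]; rewrite cats0 => ->; rewrite pop_all ES catA.
have EW' : F T3 (xt ++ [:: 1], [::], [::]) = (O ++ P) ++ 1 :: S2.
  by rewrite Hz EF catA.
rewrite EW EW'.
set u := O ++ P; set v := S2.
have HuW : uniq (u ++ v).
  by rewrite -EW (perm_uniq (F_perm _ _)) /content /=.
have Hmem : forall y, y \in u ++ v -> 2 <= y.
  by move=> y Hy; apply: Hge; rewrite -(perm_mem (F_perm T3 (xt, [::], [::]))) EW.
case: (boolP (sorted (fun a b => b < a) u)) => Hu.
  rewrite (@west_insert u v 1 Hu); last by move=> y /Hmem; lia.
  by rewrite /= eqseq_cons eqxx.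
have Hu_u : uniq u by move: HuW; rewrite cat_uniq => /and3P[].
have [b [c [Hs Hr]]] : exists b c, subseq [:: b; c] u /\ b < c.
  move: Hu; rewrite sorted_pairwise; last by move=> ? ? ? /=; lia.
  move=> /not_pairwise [b [c [Hs Hr]]]; exists b, c; split => //.
  have Hne : b != c.
    by have := subseq_uniq Hs Hu_u; rewrite /= inE andbT.
  move: Hr Hne; rewrite /=; lia.
have Hb : 2 <= b by apply: Hmem; rewrite mem_cat (mem_subseq Hs) // mem_head.
have -> : (F W2 (u ++ 1 :: v, [::], [::]) == iota 1 n.+1) = false.
  apply/negP => /eqP E.
  apply: (west231 (y := u ++ 1 :: v)); last by rewrite E iota_ltn_sorted.
  exists b, c, 1; split; last by lia.
  by apply: sub3_of => //; exact: mem_head.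
apply/negP => /eqP E.
have Hno : ~ pat231 (u ++ v).
  by move=> H; apply: (west231 H); rewrite E iota_ltn_sorted.
apply: Hno.
have EOS : O ++ S = u ++ v by rewrite ES catA.
case: Hcase => [|H2S]; first by rewrite EOS.
rewrite /u /v -catA; apply: (asc_contra (b := b) (c := c)) => //.
- by rewrite -ES.
- by rewrite catA.
- by rewrite -ES.
- by move=> y Hy; apply: Hmem; rewrite /u /v -catA.
- by rewrite -ES.
Qed.

Lemma sT_F T y : s_T T y = F T (y, [::], [::]).
Proof. by rewrite /F /final /meas /= addn0. Qed.

Unset Implicit Arguments.

Theorem proposition4p7 (n : nat) (x : seq nat) :
  5 <= n -> is_perm n x ->
  (in_Sort n [:: 1; 2; 3] [:: 3; 2; 1] x <->
   in_Sort n.+1 [:: 1; 2; 3] [:: 3; 2; 1] (inc x)).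
Proof.
move=> Hn Hp.
have Hmi : map succn (iota 1 n) = iota 2 n.
  by elim: n {Hn Hp} 1 => //= k IH m; rewrite IH.
have Hpx : perm_eq (map succn x) (iota 2 n) by rewrite -Hmi; apply: perm_map.
have Hpi : is_perm n.+1 (inc x).
  by rewrite /is_perm /inc perm_rcons /= perm_cons.
rewrite /in_Sort Hp Hpi /=.
have -> : inc x = map succn x ++ [:: 1] by rewrite /inc cats1.
rewrite /west_s /s_pair !sT_F.
have -> : (F W2 (F [:: [:: 1; 2; 3]; [:: 3; 2; 1]] (x, [::], [::]), [::], [::]) == iota 1 n)
  = (F W2 (F T3 (map succn x, [::], [::]), [::], [::]) == iota 2 n).
  rewrite -Hmi -(inj_eq (inj_map succn_inj)) -!F_map //.
rewrite -(core Hpx); last lia.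
by [].
Qed.
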